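(* Let $\mathcal{H}_A\cong\mathbb{C}^d$ and let $M=\{M_0,M_1\}$, $N=\{N_0,N_1\}$ be two-outcome projective measurements on $\mathcal{H}_A$ (i.e. $M_0,M_1$ orthogonal projectors with $M_0+M_1=I$, and likewise for $N$), with $M\neq N$, and let $\Phi_M,\Phi_N:\mathcal{L}(\mathcal{H}_A)\to\mathcal{L}(\mathbb{C}^2)$ be the corresponding measurement channels. If $\Phi_M,\Phi_N$ form a Maximal Entanglement Worst Case pair, i.e. $\|\Phi_M-\Phi_N\|_\diamond=d\,\|\Phi_M-\Phi_N\|_{\mathrm{ME}}$, then $M$ and $N$ are different coarse-grainings of one projective measurement: there exist mutually orthogonal projectors $P_1,P_2,P_3$ with $P_1+P_2+P_3=I$ and $P_2$ of rank one such that either $(M_0,N_0)=(P_1+P_2,P_1)$ or $(M_0,N_0)=(P_1,P_1+P_2)$. Furthermore, in this case the channels are perfectly distinguishable: $\|\Phi_M-\Phi_N\|_\diamond=2$. *)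

(* Defs.v *)
From HB Require Import structures.
From mathcomp Require Import all_boot all_order all_algebra.
From mathcomp Require Import classical_sets reals.
From mathcomp Require Import complex.
From mathcomp Require mxtens.

Set Implicit Arguments.
Unset Strict Implicit.
Unset Printing Implicit Defensive.

Import Order.TTheory GRing.Theory Num.Theory.
Local Open Scope ring_scope.
Local Open Scope complex_scope.
Local Open Scope classical_set_scope.

Section QuantumDefs.
Variable R : realType.
Local Notation C := (R[i]).

Definition adj m n (A : 'M[C]_(m, n)) : 'M[C]_(n, m) := (map_mx Num.Def.conjC A)^T.

Definition is_projector n (P : 'M[C]_n) : Prop :=
  P *m P = P /\ adj P = P.

Definition is_proj_meas2 n (M0 M1 : 'M[C]_n) : Prop :=
  is_projector M0 /\ is_projector M1 /\ M0 + M1 = 1%:M.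

Definition is_state n (rho : 'M[C]_n) : Prop :=
  adj rho = rho /\
  (forall v : 'rV[C]_n, 0 <= (v *m rho *m adj v) 0 0) /\
  \tr rho = 1.

(* trace norm ||A||_1 = tr sqrt(A^dagger A) = sum of the singular values,
   i.e. the sum of the square roots of the eigenvalues of the (normal,
   positive semidefinite) matrix A^dagger A, given by the spectral theorem. *)
Definition trnorm n (A : 'M[C]_n) : R :=
  \sum_(i < n) complex.Re (sqrtC (spectral_diag (adj A *m A) 0 i)).

Definition meas_channel n (M0 M1 : 'M[C]_n) (X : 'M[C]_n) : 'M[C]_2 :=
  \tr (M0 *m X) *: delta_mx 0 0 + \tr (M1 *m X) *: delta_mx 1 1.

(* (Phi (x) id_k)(rho) on C^m (x) C^k, with the product basis |x>|j>
   indexed by mxtens_index (x, j). *)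
Definition tens_id m n k (Phi : 'M[C]_m -> 'M[C]_n) (rho : 'M[C]_(m * k))
  : 'M[C]_(n * k) :=
  \matrix_(r, c)
    (let rj := mxtens.mxtens_unindex r in
     let cl := mxtens.mxtens_unindex c in
     Phi (\matrix_(x, y) rho (mxtens.mxtens_index (x, rj.2))
                             (mxtens.mxtens_index (y, cl.2))) rj.1 cl.1).

Definition diamond_norm m n (Phi : 'M[C]_m -> 'M[C]_n) : R :=
  sup [set trnorm (tens_id Phi rho) | rho in [set rho : 'M[C]_(m * m) | is_state rho]].

(* maximally entangled state |Omega><Omega|, Omega = d^{-1/2} sum_i |i>|i> *)
Definition max_ent d : 'M[C]_(d * d) :=
  \matrix_(r, c)
    (let xj := mxtens.mxtens_unindex r in
     let yl := mxtens.mxtens_unindex c in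
     if (xj.1 == xj.2) && (yl.1 == yl.2) then (d%:R)^-1 else 0).

Definition me_norm m n (Phi : 'M[C]_m -> 'M[C]_n) : R :=
  trnorm (tens_id Phi (max_ent m)).

End QuantumDefs.

(* Main.v *)
Require Import Defs.
From HB Require Import structures.
From mathcomp Require Import all_boot all_order all_algebra.
From mathcomp Require Import classical_sets reals.
From mathcomp Require Import complex.
From mathcomp Require Import sesquilinear spectral.
From mathcomp Require Import mxtens.
From mathcomp Require Import ring.

Set Implicit Arguments.
Unset Strict Implicit.
Unset Printing Implicit Defensive.
Import Order.TTheory GRing.Theory Num.Theory.
Local Open Scope ring_scope.
Local Open Scope sesquilinear_scope.

Section S.
Variable R : realType.
Local Notation C := (R[i]).

Lemma adjE m n (A : 'M[C]_(m, n)) : adj A = A^t*.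
Proof. by rewrite /adj map_trmx. Qed.

Lemma char_poly_similar n (P A : 'M[C]_n) : P \in unitmx ->
  char_poly (invmx P *m A *m P) = char_poly A.
Proof.
move=> Pu; rewrite /char_poly.
have E : char_poly_mx (invmx P *m A *m P) =
  map_mx polyC (invmx P) *m char_poly_mx A *m map_mx polyC P.
  rewrite /char_poly_mx mulmxBr mulmxBl !map_mxM -!mulmxA.
  rewrite -scalar_mxC; congr (_ - _).
  by rewrite mulmxA -map_mxM mulVmx // map_mx1 mul1mx.
rewrite E !det_mulmx mulrC mulrA -det_mulmx -map_mxM mulmxV // map_mx1 det1 mul1r.
done.
Qed.


Lemma char_poly_diag n (a : 'rV[C]_n) :
  char_poly (diag_mx a) = \prod_(x <- [seq a 0 i | i <- enum 'I_n]) ('X - x%:P).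
Proof.
rewrite char_poly_trig ?diag_mx_is_trig // big_map big_enum /=.
by apply: eq_bigr => i _; rewrite mxE eqxx mulr1n.
Qed.

Lemma diag_perm n (P Q : 'M[C]_n) (a b : 'rV[C]_n) :
  P \in unitmx -> Q \in unitmx ->
  invmx P *m diag_mx a *m P = invmx Q *m diag_mx b *m Q ->
  perm_eq [seq a 0 i | i <- enum 'I_n] [seq b 0 i | i <- enum 'I_n].
Proof.
move=> Pu Qu E; apply: prod_XsubC_eq.
by rewrite -!char_poly_diag -(char_poly_similar _ Pu) E char_poly_similar.
Qed.

Lemma trnormE n (A : 'M[C]_n) (U : 'M[C]_n) (s : 'rV[C]_n) :
  U \is unitarymx -> adj A *m A = U^t* *m diag_mx s *m U ->
  trnorm A = \sum_i complex.Re (sqrtC (s 0 i)).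
Proof.
move=> Uu E; rewrite /trnorm.
have Bn : adj A *m A \is normalmx.
  apply/normalmxP; rewrite !adjE trmx_mul map_mxM trmxCK; done.
have E2 : invmx (spectralmx (adj A *m A)) *m diag_mx (spectral_diag (adj A *m A))
   *m spectralmx (adj A *m A) = invmx U *m diag_mx s *m U.
  by rewrite -(orthomx_spectralP Bn) E invmx_unitary.
have Hp := diag_perm (spectral_unit _) (unitarymx_unit Uu) E2.
have := @perm_big R +%R 0 _ _ _ predT (fun x => complex.Re (sqrtC x)) Hp.
by rewrite !big_map.
Qed.


Lemma tens_adj m n p q (A : 'M[C]_(m, n)) (B : 'M[C]_(p, q)) :
  (A *t B)^t* = A^t* *t B^t*.
Proof. by apply/matrixP => i j; rewrite !mxE /= rmorphM. Qed.

Lemma tens11 m n : (1%:M : 'M[C]_m) *t (1%:M : 'M[C]_n) = 1%:M.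
Proof.
apply/matrixP => i j.
case: (mxtens_indexP i) => a b; case: (mxtens_indexP j) => c e.
rewrite tensmxE !mxE -natrM mulnb.
by rewrite (inj_eq (can_inj (@mxtens_indexK _ _))) xpair_eqE.
Qed.

Lemma tens_unitary m n (U : 'M[C]_m) (V : 'M[C]_n) :
  U \is unitarymx -> V \is unitarymx -> U *t V \is unitarymx.
Proof.
move=> /unitarymxP HU /unitarymxP HV; apply/unitarymxP.
by rewrite tens_adj tensmx_mul HU HV tens11.
Qed.

Lemma tens_diag m n (a : 'rV[C]_m) (b : 'rV[C]_n) :
  diag_mx a *t diag_mx b =
  diag_mx (\row_r (a 0 (mxtens_unindex r).1 * b 0 (mxtens_unindex r).2)).
Proof.
apply/matrixP => i j.
case: (mxtens_indexP i) => x y; case: (mxtens_indexP j) => z w.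
rewrite tensmxE !mxE !mxtens_indexK /=.
rewrite (inj_eq (can_inj (@mxtens_indexK _ _))) xpair_eqE.
by case: (x == z); case: (y == w); rewrite /= ?mulr0n ?mulr1n ?mulr0 ?mul0r.
Qed.

Lemma sum_tens m n (F : 'I_(m * n) -> C) :
  \sum_r F r = \sum_i \sum_j F (mxtens_index (i, j)).
Proof.
rewrite pair_big /=; apply: reindex => /=.
exists (@mxtens_unindex m n) => r _.
  by case: r => a b; rewrite mxtens_indexK.
by rewrite -surjective_pairing mxtens_unindexK.
Qed.

Lemma sum_tensR m n (F : 'I_(m * n) -> R) :
  \sum_r F r = \sum_i \sum_j F (mxtens_index (i, j)).
Proof.
rewrite pair_big /=; apply: reindex => /=.
exists (@mxtens_unindex m n) => r _.
  by case: r => a b; rewrite mxtens_indexK.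
by rewrite -surjective_pairing mxtens_unindexK.
Qed.


Lemma diag_mxM n (a b : 'rV[C]_n) :
  diag_mx a *m diag_mx b = diag_mx (\row_i (a 0 i * b 0 i)).
Proof.
apply/matrixP => i j; rewrite mul_diag_mx !mxE.
by case: (i == j); rewrite ?mulr1n ?mulr0n ?mulr0.
Qed.

Lemma diag_adj n (a : 'rV[C]_n) : (diag_mx a)^t* = diag_mx (map_mx Num.conj a).
Proof. by rewrite tr_diag_mx map_diag_mx. Qed.

Definition sg2 : 'rV[C]_2 := \row_(i < 2) (-1) ^+ i.
Definition Sg : 'M[C]_2 := diag_mx sg2.

Lemma Sg_unitary : Sg^t* *m Sg = 1%:M.
Proof.
rewrite /Sg diag_adj diag_mxM -diag_const_mx; congr diag_mx.
apply/rowP => i; rewrite !mxE.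
by rewrite rmorph_sign -exprD -signr_odd oddD addbb.
Qed.

Lemma real_sqrt_sq (x : C) : x \is Num.real -> sqrtC (x * x) = `|x|.
Proof. by move=> xr; rewrite -expr2 -real_normK // sqrCK. Qed.

Lemma trnorm_SgX n (X W : 'M[C]_n) (xi : 'rV[C]_n) :
  W \is unitarymx -> (forall j, xi 0 j \is Num.real) ->
  X = W^t* *m diag_mx xi *m W ->
  trnorm (Sg *t X) = 2%:R * \sum_j complex.Re `|xi 0 j|.
Proof.
move=> Wu xr EX.
have Xh : X^t* = X.
  rewrite EX !trmx_mul !map_mxM trmxCK diag_adj mulmxA.
  have -> : map_mx Num.conj xi = xi.
    by apply/rowP => j; rewrite mxE; rewrite (CrealP (xr j)).
  done.
have XX : X^t* *m X = W^t* *m diag_mx (\row_i (xi 0 i * xi 0 i)) *m W.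
  rewrite Xh {1}EX -!mulmxA; congr (_ *m _); rewrite EX !mulmxA mulmxtVK //.
  by rewrite diag_mxM.
rewrite (trnormE (U := (1%:M : 'M_2) *t W) (s := \row_r (1 * (xi 0 (mxtens_unindex r).2 * xi 0 (mxtens_unindex r).2)))).
  rewrite sum_tensR.
  under eq_bigr => i _ do under eq_bigr => j _ do rewrite mxE mxtens_indexK mul1r real_sqrt_sq //.
  by rewrite big_ord_recr big_ord1 mulr_natl mulr2n.
- by apply: tens_unitary => //; apply/unitarymxP; rewrite trmx1 map_mx1 mulmx1.
- rewrite adjE tens_adj tensmx_mul Sg_unitary XX tens_adj trmx1 map_mx1.
  have -> : diag_mx (\row_r (1 * (xi 0 (mxtens_unindex r).2 * xi 0 (mxtens_unindex r).2)))
     = diag_mx (const_mx 1 : 'rV[C]_2) *t diag_mx (\row_i (xi 0 i * xi 0 i)).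
    by rewrite tens_diag; congr diag_mx; apply/rowP => r; rewrite !mxE.
  by rewrite diag_const_mx !tensmx_mul !mul1mx.
Qed.


Lemma state_bound n (rho T U : 'M[C]_n) (a : 'rV[C]_n) (c : C) :
  is_state rho -> U \is unitarymx -> T = U^t* *m diag_mx a *m U ->
  (forall r, a 0 r <= c) -> \tr (T *m rho) <= c.
Proof.
move=> [_ [rpos rtr]] Uu -> ac.
have qE : forall r, (U *m rho *m U^t*) r r = (row r U *m rho *m (row r U)^t*) 0 0.
  move=> r; rewrite !mxE; apply: eq_bigr => k _; rewrite !mxE; congr (_ * _).
  by apply: eq_bigr => l _; rewrite !mxE.
have q0 : forall r, 0 <= (U *m rho *m U^t*) r r.
  by move=> r; rewrite qE -adjE; apply: rpos.
have q1 : \sum_r (U *m rho *m U^t*) r r = 1.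
  have -> : \sum_r (U *m rho *m U^t*) r r = \tr (U *m rho *m U^t*) by [].
  rewrite mxtrace_mulC mulmxA.
  have -> : U^t* *m U = 1%:M by apply: mulmx1C; apply/unitarymxP.
  by rewrite mul1mx.
rewrite -mulmxA mxtrace_mulC !mulmxA mxtrace_mulC !mulmxA mxtrace_mulC.
have -> : \tr (diag_mx a *m (U *m rho *m U^t*)) = \sum_r a 0 r * (U *m rho *m U^t*) r r.
  by rewrite /mxtrace; apply: eq_bigr => r _; rewrite mul_diag_mx mxE.
apply: (@le_trans _ _ (\sum_r c * (U *m rho *m U^t*) r r)).
  by apply: ler_sum => r _; apply: ler_wpM2r.
by rewrite -mulr_sumr q1 mulr1.
Qed.


Lemma Re_sum n (F : 'I_n -> C) : complex.Re (\sum_i F i) = \sum_i complex.Re (F i).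
Proof.
apply: (big_morph (@complex.Re R)) => //.
by move=> [a b] [e f].
Qed.

Lemma herm_spec n (X : 'M[C]_n) : X^t* = X ->
  [/\ spectralmx X \is unitarymx,
      X = (spectralmx X)^t* *m diag_mx (spectral_diag X) *m spectralmx X &
      forall j, spectral_diag X 0 j \is Num.real].
Proof.
move=> Xh.
have Xhs : X \is hermsymmx by apply/is_hermitianmxP; rewrite expr0 scale1r Xh.
split; first exact: spectral_unitarymx.
  rewrite -invmx_unitary ?spectral_unitarymx //.
  by apply/orthomx_spectralP; apply: hermitian_normalmx.
by move=> j; have /mxOverP := hermitian_spectral_diag_real Xhs; apply.
Qed.

Lemma Re_mulnat (z : C) (n : nat) : complex.Re (z * n%:R) = complex.Re z * n%:R.
Proof.
have -> : (n%:R : C) = real_complex R (n%:R : R) by rewrite rmorph_nat.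
by case: z => a b /=; rewrite mulr0 subr0.
Qed.

Section Chan.
Variables (d : nat) (D : 'M[C]_d).
Hypothesis Dh : D^t* = D.

Definition blk (rho : 'M[C]_(d * d)) j l : 'M[C]_d :=
  \matrix_(x, y) rho (mxtens_index (x, j)) (mxtens_index (y, l)).
Definition Xof (rho : 'M[C]_(d * d)) : 'M[C]_d :=
  \matrix_(j, l) \tr (D *m blk rho j l).

Lemma tens_id_Sg (rho : 'M[C]_(d * d)) :
  tens_id (fun X => \tr (D *m X) *: Sg) rho = Sg *t Xof rho.
Proof.
apply/matrixP => r c; rewrite !mxE /=.
by rewrite !mxE mulrC.
Qed.

Lemma Dentry x y : Num.conj (D x y) = D y x.
Proof. by rewrite -{2}Dh !mxE. Qed.

Lemma XofE rho j l :
  \tr (D *m blk rho j l) = \sum_x \sum_y D x y * rho (mxtens_index (y, j)) (mxtens_index (x, l)).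
Proof.
rewrite /mxtrace; apply: eq_bigr => x _; rewrite mxE.
by apply: eq_bigr => y _; rewrite mxE.
Qed.

Lemma Xof_herm rho : rho^t* = rho -> (Xof rho)^t* = Xof rho.
Proof.
move=> rh; apply/matrixP => j l; rewrite !mxE !XofE rmorph_sum /=.
rewrite exchange_big /=; apply: eq_bigr => x _.
rewrite rmorph_sum /=; apply: eq_bigr => y _.
rewrite rmorphM /= Dentry; congr (_ * _).
by rewrite -{2}rh !mxE.
Qed.

Lemma tr_tens rho (S : 'M[C]_d) :
  \tr ((D *t S) *m rho) = \tr (S *m Xof rho).
Proof.
rewrite /mxtrace.
transitivity (\sum_x \sum_l \sum_y \sum_j
    D x y * S l j * rho (mxtens_index (y, j)) (mxtens_index (x, l))).
  rewrite sum_tens; apply: eq_bigr => x _; apply: eq_bigr => l _.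
  rewrite mxE sum_tens; apply: eq_bigr => y _; apply: eq_bigr => j _.
  by rewrite tensmxE.
rewrite exchange_big /=; apply: eq_bigr => l _.
rewrite mxE; under [RHS]eq_bigr => j _ do rewrite mxE XofE mulr_sumr.
under eq_bigr => x _ do rewrite exchange_big /=.
rewrite exchange_big /=; apply: eq_bigr => j _; apply: eq_bigr => x _.
rewrite mulr_sumr; apply: eq_bigr => y _.
by rewrite mulrA [S l j * _]mulrC.
Qed.

Lemma diamond_bound rho (V : 'M[C]_d) (mu : 'rV[C]_d) (c : C) :
  is_state rho -> V \is unitarymx -> D = V^t* *m diag_mx mu *m V ->
  (forall x, mu 0 x \is Num.real) -> (forall x, `|mu 0 x| <= c) ->
  trnorm (Sg *t Xof rho) <= 2%:R * complex.Re c.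
Proof.
move=> rs Vu DV mur muc.
have rh : rho^t* = rho by rewrite -adjE; case: rs.
have Xh := Xof_herm rh.
have [Wu EX xir] := herm_spec Xh.
set W := spectralmx _ in Wu EX; set xi := spectral_diag _ in EX xir.
rewrite (trnorm_SgX Wu xir EX) -Re_sum.
set sgv : 'rV[C]_d := \row_j (if 0 <= xi 0 j then 1 else -1).
set S := W^t* *m diag_mx sgv *m W.
have E1 : \tr (S *m Xof rho) = \sum_j `|xi 0 j|.
  rewrite [Xof rho]EX /S !mulmxA mulmxtVK // -!mulmxA mxtrace_mulC mulmxA.
  rewrite mulmxtVK // diag_mxM /mxtrace; apply: eq_bigr => j _.
  rewrite !mxE eqxx mulr1n.
  case: ifP => h; first by rewrite mul1r ger0_norm.
  rewrite mulN1r ler0_norm //.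
  by move/negbT: h; rewrite -real_ltNge ?real0 ?xir // => /ltW.
have E2 : \tr (S *m Xof rho) <= c.
  rewrite -tr_tens.
  apply: (@state_bound _ _ _ (V *t W) (\row_r (mu 0 (mxtens_unindex r).1 * sgv 0 (mxtens_unindex r).2))) => //.
  - exact: tens_unitary.
  - rewrite tens_adj -tens_diag !tensmx_mul -DV.
    by [].
  - move=> r; rewrite mxE.
    have hr : mu 0 (mxtens_unindex r).1 * sgv 0 (mxtens_unindex r).2 \is Num.real.
      by rewrite realM ?mur // mxE; case: ifP; rewrite ?real1 ?realN ?real1.
    apply: le_trans (real_ler_norm hr) _.
    rewrite normrM mxE; case: ifP => _; rewrite ?normrN normr1 mulr1; exact: muc.
rewrite -E1; move: E2; rewrite lecE => /andP [_ H].
by rewrite ler_wpM2l.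
Qed.

Lemma me_X : Xof (@max_ent R d) = (d%:R)^-1 *: D^T.
Proof.
apply/matrixP => j l; rewrite !mxE XofE.
under eq_bigr => x _ do under eq_bigr => y _ do rewrite mxE !mxtens_indexK /=.
rewrite (bigD1 l) //= [X in _ + X]big1 => [|x /negbTE xl]; last first.
  by apply: big1 => y _; rewrite xl andbF mulr0.
rewrite addr0 (bigD1 j) //= [X in _ + X]big1 => [|y /negbTE yj]; last by rewrite yj mulr0.
by rewrite !eqxx addr0 /= mulrC.
Qed.

Lemma me_spec (V : 'M[C]_d) (mu : 'rV[C]_d) :
  V \is unitarymx -> D = V^t* *m diag_mx mu *m V ->
  Xof (@max_ent R d) = (map_mx Num.conj V)^t* *m diag_mx (\row_i (mu 0 i / d%:R)) *m map_mx Num.conj V.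
Proof.
move=> Vu DV; rewrite me_X DV !trmx_mul tr_diag_mx.
have -> : diag_mx (\row_i (mu 0 i / d%:R)) = (d%:R)^-1 *: diag_mx mu.
  by apply/matrixP => a b; rewrite !mxE; case: (a == b); rewrite ?mulr1n ?mulr0n ?mulr0 // mulrC.
rewrite -scalemxAr -scalemxAl; congr (_ *: _).
rewrite mulmxA; congr (_ *m _ *m _); apply/matrixP => a b; rewrite !mxE //.
by rewrite conjCK.
Qed.

Lemma me_val (V : 'M[C]_d) (mu : 'rV[C]_d) :
  (0 < d)%N -> V \is unitarymx -> D = V^t* *m diag_mx mu *m V ->
  (forall x, mu 0 x \is Num.real) ->
  d%:R * trnorm (Sg *t Xof (@max_ent R d)) = 2%:R * \sum_j complex.Re `|mu 0 j|.
Proof.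
move=> d0 Vu DV mur.
have Wu : map_mx Num.conj V \is unitarymx by rewrite conjC_unitary.
rewrite (trnorm_SgX Wu _ (me_spec Vu DV)); last first.
  by move=> j; rewrite mxE realM ?mur // realV realn.
rewrite mulrCA; congr (_ * _); rewrite mulr_sumr; apply: eq_bigr => j _.
rewrite mxE mulrC -Re_mulnat normrM normfV normr_nat divfK //.
by rewrite pnatr_eq0 -lt0n.
Qed.

End Chan.


Lemma mx11E (M : 'M[C]_1) : M = (M 0 0)%:M.
Proof. exact: mx11_scalar. Qed.

Lemma proj_rank1 n (P Q : 'M[C]_n) (w : 'cV[C]_n) (lam : C) :
  P *m P = P -> Q *m Q = Q -> w^t* *m w = 1%:M -> lam != 0 ->
  P = Q + lam *: (w *m w^t*) ->
  (lam = 1 /\ Q *m w = 0) \/ (lam = -1 /\ P *m w = 0).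
Proof.
move=> PP QQ ww l0 PQ.
set a := (w^t* *m Q *m w) 0 0.
have Ea : w^t* *m Q *m w = a%:M by apply: mx11E.
have Ew : w *m w^t* *m w = w by rewrite -mulmxA ww mulmx1.
have EQw : w *m w^t* *m (Q *m w) = a *: w.
  by rewrite -mulmxA [w^t* *m _]mulmxA Ea mul_mx_scalar.
have Pw : P *m w = Q *m w + lam *: w.
  by rewrite PQ mulmxDl -scalemxAl Ew.
have PQw : P *m (Q *m w) = Q *m w + (lam * a) *: w.
  by rewrite PQ mulmxDl mulmxA QQ -scalemxAl EQw scalerA.
have H : P *m (P *m w) = P *m w by rewrite mulmxA PP.
rewrite {1}Pw mulmxDr -scalemxAr PQw Pw in H.
have Qw : Q *m w = (1 - a - lam) *: w.
  move: (Q *m w) H => u H.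
  apply/colP => i; move/colP: H => /(_ i); rewrite !mxE => Hi.
  apply: (mulfI l0); apply/eqP; rewrite -subr_eq0; apply/eqP.
  set q := u i 0 in Hi *; set y := w i 0 in Hi *.
  transitivity ((q + lam * a * y + lam * (q + lam * y)) - (q + lam * y)).
    ring.
  by rewrite Hi subrr.
have wsc : forall c1 c2 : C, c1 *: w = c2 *: w -> c1 = c2.
  move=> c1 c2 /(congr1 (fun M => w^t* *m M)); rewrite -!scalemxAr ww !scalemx1.
  by move/matrixP => /(_ 0 0); rewrite !mxE eqxx !mulr1n.
have Hb : a = 1 - a - lam.
  move: Ea; rewrite -mulmxA Qw -scalemxAr ww scalemx1 => /matrixP /(_ 0 0).
  by rewrite !mxE eqxx !mulr1n.
rewrite -Hb in Qw.
have Ha : a * a = a.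
  apply: wsc; rewrite -scalerA -Qw scalemxAr -Qw mulmxA QQ //.
have : a * (a - 1) = 0 by rewrite mulrBr mulr1 Ha subrr.
move/eqP; rewrite mulf_eq0 subr_eq0 => /orP [] /eqP a01.
  left; split.
    by apply/eqP; rewrite -subr_eq0; apply/eqP; move: Hb; rewrite a01 subr0 => /eqP; rewrite eq_sym subr_eq0 => /eqP <-; rewrite subrr.
  by rewrite Qw a01 scale0r.
have l1 : lam = -1.
  by move: Hb; rewrite a01 subrr sub0r => /eqP; rewrite eq_sym eqr_oppLR => /eqP.
right; split => //.
by rewrite Pw Qw a01 l1 scale1r scaleN1r addrN.
Qed.


Lemma nested n (Q : 'M[C]_n) (w : 'cV[C]_n) :
  Q *m Q = Q -> Q^t* = Q -> w^t* *m w = 1%:M -> Q *m w = 0 ->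
  let E := w *m w^t* in let P3 := 1%:M - Q - E in
     is_projector Q /\ is_projector E /\ is_projector P3 /\
     (Q *m E = 0 /\ E *m Q = 0) /\
     (Q *m P3 = 0 /\ P3 *m Q = 0) /\
     (E *m P3 = 0 /\ P3 *m E = 0) /\
     Q + E + P3 = 1%:M /\
     \rank E = 1%N.
Proof.
move=> QQ Qh ww Qw E P3.
have EE : E *m E = E by rewrite /E mulmxA -[w *m _ *m w]mulmxA ww mulmx1.
have Eh : E^t* = E by rewrite /E trmx_mul map_mxM trmxCK.
have QE : Q *m E = 0 by rewrite /E mulmxA Qw mul0mx.
have EQ : E *m Q = 0.
  rewrite /E -mulmxA -{1}Qh -map_mxM -trmx_mul Qw.
  by rewrite trmx0 map_mx0 mulmx0.
have P3h : P3^t* = P3.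
  by rewrite /P3 !linearB /= !map_mxB /= trmx1 map_mx1 Qh Eh.
have QP3 : Q *m P3 = 0 by rewrite /P3 !mulmxBr mulmx1 QQ QE !subrr.
have P3Q : P3 *m Q = 0 by rewrite /P3 !mulmxBl mul1mx QQ EQ !subrr.
have EP3 : E *m P3 = 0 by rewrite /P3 !mulmxBr mulmx1 EQ EE subr0 subrr.
have P3E : P3 *m E = 0 by rewrite /P3 !mulmxBl mul1mx QE EE subr0 subrr.
have P3P3 : P3 *m P3 = P3.
  by rewrite {1}/P3 !mulmxBl mul1mx QP3 EP3 !subr0.
rewrite /is_projector !adjE.
do 7 (split => //).
  by rewrite /P3 -[1%:M - Q - E]addrA -opprD addrC addrA subrr add0r.
apply/eqP; rewrite eqn_leq; apply/andP; split.
  by apply: leq_trans (mxrankM_maxl _ _) (rank_leq_col w).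
rewrite lt0n mxrank_eq0; apply/eqP => E0.
have : E *m w = w by rewrite /E -mulmxA ww mulmx1.
rewrite E0 mul0mx => w0.
move: ww; rewrite -w0 mulmx0 => /matrixP /(_ 0 0); rewrite !mxE eqxx /= => /esym/eqP; by rewrite oner_eq0.
Qed.


Lemma Sg_delta : Sg = delta_mx 0 0 - delta_mx 1 1.
Proof.
apply/matrixP => i j; rewrite !mxE.
by case: i => [[|[|i]] hi] //; case: j => [[|[|j]] hj] //=; rewrite ?subr0 ?sub0r ?expr0 ?expr1 ?mulr1n ?mulr0n ?subrr.
Qed.

Lemma chan_eq n (M0 M1 N0 N1 X : 'M[C]_n) :
  M0 + M1 = 1%:M -> N0 + N1 = 1%:M ->
  meas_channel M0 M1 X - meas_channel N0 N1 X = \tr ((M0 - N0) *m X) *: Sg.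
Proof.
move=> hM hN.
have -> : M1 = 1%:M - M0 by rewrite -hM addrAC subrr add0r.
have -> : N1 = 1%:M - N0 by rewrite -hN addrAC subrr add0r.
rewrite /meas_channel Sg_delta !mulmxBl !mul1mx !linearB /=.
apply/matrixP => i j; rewrite !mxE; ring.
Qed.


Lemma Re_norm_eq0 (z : C) : complex.Re `|z| = 0 -> z = 0.
Proof.
move=> h; apply/eqP; rewrite -normr_eq0.
have : complex.Im `|z| = 0 by apply: ger0_Im.
by case: `|z| h => a b /= -> ->.
Qed.

Lemma norm_le (a b : C) : complex.Re `|a| <= complex.Re `|b| -> `|a| <= `|b|.
Proof.
move=> h; rewrite lecE h andbT.
by rewrite !ger0_Im.
Qed.

Lemma state_scalar n : (0 < n)%N -> is_state ((n%:R)^-1 *: 1%:M : 'M[C]_n).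
Proof.
move=> n0; split; [|split].
- rewrite adjE; apply/matrixP => i j; rewrite !mxE.
  by rewrite rmorphM fmorphV !rmorph_nat eq_sym.
- move=> v; rewrite -scalemxAr mulmx1 -scalemxAl mxE.
  apply: mulr_ge0; first by rewrite invr_ge0 ler0n.
  rewrite mxE; apply: sumr_ge0 => i _; rewrite !mxE.
  exact: mul_conjC_ge0.
- by rewrite mxtraceZ mxtrace1 mulVf // pnatr_eq0 -lt0n.
Qed.

End S.

Theorem corollary5 (R : realType) (d : nat) (M0 M1 N0 N1 : 'M[R[i]]_d) :
  is_proj_meas2 M0 M1 -> is_proj_meas2 N0 N1 ->
  (M0, M1) <> (N0, N1) ->
  diamond_norm (fun X => meas_channel M0 M1 X - meas_channel N0 N1 X)
    = d%:R * me_norm (fun X => meas_channel M0 M1 X - meas_channel N0 N1 X) ->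
  (exists P1 P2 P3 : 'M[R[i]]_d,
     is_projector P1 /\ is_projector P2 /\ is_projector P3 /\
     (P1 *m P2 = 0 /\ P2 *m P1 = 0) /\
     (P1 *m P3 = 0 /\ P3 *m P1 = 0) /\
     (P2 *m P3 = 0 /\ P3 *m P2 = 0) /\
     P1 + P2 + P3 = 1%:M /\
     \rank P2 = 1%N /\
     ((M0 = P1 + P2 /\ N0 = P1) \/ (M0 = P1 /\ N0 = P1 + P2)))
  /\ diamond_norm (fun X => meas_channel M0 M1 X - meas_channel N0 N1 X) = 2.
Proof.
move=> [[M0M0 M0h] [[M1M1 M1h] hM]] [[N0N0 N0h] [[N1N1 N1h] hN]] hne.
rewrite !adjE in M0h M1h N0h N1h.
set D := M0 - N0.
have Phi : (fun X => meas_channel M0 M1 X - meas_channel N0 N1 X) =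
           (fun X => \tr (D *m X) *: Sg R).
  by apply: boolp.funext => X; rewrite chan_eq.
rewrite Phi /me_norm /diamond_norm.
have Dh : D^t* = D by rewrite /D linearB /= map_mxB /= M0h N0h.
have M1E : M1 = 1%:M - M0 by rewrite -hM addrAC subrr add0r.
have N1E : N1 = 1%:M - N0 by rewrite -hN addrAC subrr add0r.
have DN0 : D != 0.
  apply/eqP => D0; apply: hne.
  have E : M0 = N0 by apply/eqP; rewrite -subr_eq0; apply/eqP.
  by rewrite M1E N1E E.
have d0 : (0 < d)%N.
  rewrite lt0n; apply/eqP => d0; move: DN0; rewrite /D; move: M0 N0 {M0M0 M0h hM M1E N0N0 N0h hN N1E D Dh Phi hne}.
  by rewrite d0 => M0 N0; rewrite (flatmx0 M0) (flatmx0 N0) subrr eqxx.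
have [Vu DV mur] := herm_spec Dh.
set V := spectralmx D in Vu DV; set mu := spectral_diag D in DV mur.
have ME := me_val d0 Vu DV mur.
rewrite -tens_id_Sg in ME.
rewrite ME => hdiam.
pose F := fun x => complex.Re `|mu 0 x|.
have [x0 _ Hx0] := @arg_maxP _ R _ (Ordinal d0) predT F isT.
have muc : forall x, `|mu 0 x| <= `|mu 0 x0|.
  by move=> x; apply: norm_le; apply: Hx0.
have ub : ubound ([set trnorm (tens_id (fun X => \tr (D *m X) *: Sg R) rho) | rho in
             [set rho : 'M_(d * d) | is_state rho]])%classic (2%:R * complex.Re `|mu 0 x0|).
  move=> z [rho rs <-]; rewrite tens_id_Sg.
  exact: (diamond_bound Dh rs Vu DV mur muc).
have ne : ([set trnorm (tens_id (fun X => \tr (D *m X) *: Sg R) rho) | rho in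
             [set rho : 'M_(d * d) | is_state rho]] !=set0)%classic.
  exists (trnorm (tens_id (fun X => \tr (D *m X) *: Sg R) ((((d * d)%N)%:R)^-1 *: 1%:M : 'M[R[i]]_(d * d)))).
  by exists ((((d * d)%N)%:R)^-1 *: 1%:M : 'M[R[i]]_(d * d)) => //; apply: state_scalar; rewrite muln_gt0 d0.
have := ge_sup ne ub; rewrite hdiam => hle.
have F0 : forall x, 0 <= F x.
  by move=> x; have := normr_ge0 (mu 0 x); rewrite lecE => /andP [_].
have hS : \sum_j F j <= F x0 by rewrite ler_pM2l ?ltr0n // in hle.
have hz : forall j, j != x0 -> mu 0 j = 0.
  have hS' : \sum_(j | j != x0) F j = 0.
    apply/le_anti/andP; split; last by apply: sumr_ge0 => j _; apply: F0.
    by move: hS; rewrite (bigD1 x0) //= gerDl.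
  move=> j jx; apply: Re_norm_eq0.
  by apply: (psumr_eq0P _ hS') => // k _; apply: F0.
have sumF : \sum_j F j = F x0.
  rewrite (bigD1 x0) //= big1 ?addr0 // => j jx.
  by rewrite /F hz // normr0.
set lam := mu 0 x0.
set w : 'cV[R[i]]_d := (row x0 V)^t*.
have DE : D = lam *: (w *m w^t*).
  rewrite DV; apply/matrixP => i j; rewrite mxE mul_mx_diag !mxE.
  rewrite (bigD1 x0) //= big1 ?addr0 => [|k kx]; last by rewrite !mxE hz // mulr0 mul0r.
  rewrite !mxE big_ord1 !mxE conjCK.
  by rewrite /lam mulrCA mulrA.
have ww : w^t* *m w = 1%:M.
  apply/matrixP => i j; rewrite !ord1 !mxE /=.
  have := unitarymxP Vu => /matrixP /(_ x0 x0); rewrite !mxE eqxx /= => <-.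
  by apply: eq_bigr => k _; rewrite !mxE conjCK.
have l0 : lam != 0.
  by apply: contra DN0 => /eqP l0; rewrite DE l0 scale0r.
have M0E : M0 = N0 + lam *: (w *m w^t*) by rewrite -DE /D addrC subrK.
have NEh : N0^t* = N0 := N0h.
have MEh : M0^t* = M0 := M0h.
have [[l1 Nw] | [l1 Mw]] := proj_rank1 M0M0 N0N0 ww l0 M0E.
- split; last by rewrite sumF /F -/lam l1 normr1 mulr1.
  have [P1p [P2p [P3p [h12 [h13 [h23 [hs hr]]]]]]] := nested N0N0 N0h ww Nw.
  exists N0, (w *m w^t*), (1%:M - N0 - w *m w^t*); do 8 (split => //).
  by left; rewrite M0E l1 scale1r.
- split; last by rewrite sumF /F -/lam l1 normrN normr1 mulr1.
  have N0E : N0 = M0 + w *m w^t* by rewrite M0E l1 scaleN1r subrK.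
  have [P1p [P2p [P3p [h12 [h13 [h23 [hs hr]]]]]]] := nested M0M0 M0h ww Mw.
  exists M0, (w *m w^t*), (1%:M - M0 - w *m w^t*); do 8 (split => //).
  by right.
Qed.
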